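(* Let $T>0$ and let $M,N\ge 1$ be integers. Let $a\in L^2(\mathbb R)$ be supported in $[-T_a/2,T_a/2]$ for some $T_a>0$ (no further restriction on $T_a$), and suppose $a$ is square-root Nyquist for the interval $T/M$ with energy $1/N$, i.e. $$\int_{\mathbb R} a(t)\,a^*\!\left(t-k\tfrac{T}{M}\right)dt=\tfrac1N\,\delta(k)\quad\text{for all }k\in\mathbb Z.$$ Define the DDOP $u(t)=\sum_{\dot n=0}^{N-1}a(t-\dot nT)$, let $D=\lceil T_a/T\rceil$, and define its cyclically extended version $$u_c(t)=\sum_{n=-D}^{N-1+D}a(t-nT).$$ Then $$\mathcal A_{u_c,u}\!\left(m\tfrac{T}{M},\,n\tfrac{1}{NT}\right)=\delta(m)\,\delta(n)$$ for all integers $m,n$ with $|m|\le M-1$ and $|n|\le N-1$.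
   Context: For $g,\gamma\in L^2(\mathbb R)$, the (cross-)ambiguity function is $\mathcal A_{g,\gamma}(\tau,\nu)=\int_{\mathbb R} g(t)\,\gamma^*(t-\tau)\,e^{-j2\pi\nu(t-\tau)}\,dt$. Here $\delta(\cdot)$ denotes the Kronecker delta on integers, $j=\sqrt{-1}$, and $\lceil\cdot\rceil$ is the ceiling function. *)

(* Defs.v *)
From mathcomp Require Import all_boot all_order all_algebra.
From mathcomp Require Import all_classical all_reals all_analysis.
From mathcomp Require Import complex.
Import Order.TTheory GRing.Theory Num.Theory.
Local Open Scope ring_scope.
Local Open Scope complex_scope.

Set Implicit Arguments.
Unset Strict Implicit.
Unset Printing Implicit Defensive.

Definition Cintegral (R : realType) (f : R -> R[i]) : R[i] :=
  (Rintegral (@lebesgue_measure R) setT (fun t => complex.Re (f t)))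
  +i* (Rintegral (@lebesgue_measure R) setT (fun t => complex.Im (f t))).

Definition expj (R : realType) (theta : R) : R[i] := cos theta +i* sin theta.

Definition L2 (R : realType) (f : R -> R[i]) : Prop :=
  measurable_fun setT (fun t => complex.Re (f t)) /\
  measurable_fun setT (fun t => complex.Im (f t)) /\
  (\int[@lebesgue_measure R]_t ((complex.Re (f t)) ^+ 2 + (complex.Im (f t)) ^+ 2)%:E < +oo)%E.

Definition ambiguity (R : realType) (g gamma : R -> R[i]) (tau nu : R) : R[i] :=
  Cintegral (fun t => g t * (gamma (t - tau))^* *
                       expj (- (2 * pi * nu * (t - tau)))).

Definition kdelta (R : realType) (k : int) : R[i] := (k == 0)%:R.

Definition ddop (R : realType) (N : nat) (T : R) (a : R -> R[i]) (t : R) : R[i] :=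
  \sum_(n < N) a (t - n%:R * T).

(* Cyclically extended DDOP u_c(t) = sum_{n=-D}^{N-1+D} a(t - n T),
   with n = i - D, i = 0 .. N - 1 + 2D. *)
Definition ddop_c (R : realType) (N D : nat) (T : R) (a : R -> R[i]) (t : R) : R[i] :=
  \sum_(i < N + 2 * D) a (t - (i%:R - D%:R) * T).

(* Main.v *)
Require Import Defs.
From HB Require Import structures.
From mathcomp Require Import all_boot all_order all_algebra.
From mathcomp Require Import all_classical all_reals all_analysis.
From mathcomp Require Import complex measurable_realfun ring lra zify.
Import Order.TTheory GRing.Theory Num.Theory.
Import numFieldNormedType.Exports.
Local Open Scope classical_set_scope.
Local Open Scope ring_scope.
Local Open Scope complex_scope.

Definition shf {R : realType} (c : R) (x : R) := x + c.

Lemma mshift {R : realType} (c : R) : measurable_fun [set: R] (shf c).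
Proof. by apply: measurable_funD => //; exact: measurable_cst. Qed.

HB.instance Definition _ (R : realType) (c : R) :=
  isMeasurableFun.Build _ _ _ _ (shf c) (mshift c).

Section S.
Context {R : realType}.
Local Notation mu := (@lebesgue_measure R).

Lemma lebesgue_shift (c : R) (A : set R) : measurable A ->
  pushforward mu (shf c : _ -> measurableTypeR R) A = mu A.
Proof.
move=> mA; apply/esym.
apply: (@lebesgue_measure_unique R (pushforward mu (shf c : _ -> measurableTypeR R)) _ A mA); first exact: mshift.
move=> mf X; rewrite /ocitv => -[[x y] _ <-].
rewrite [RHS](_ : _ = mu `](x - c), (y - c)]%classic); last first.
  rewrite /=/pushforward; congr (mu _); apply/seteqP; split => z /=; rewrite /shf !in_itv /=.
    by move=> /andP[h1 h2]; rewrite ltrBlDr lerBrDr h1 h2.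
  by move=> /andP[h1 h2]; rewrite -ltrBlDr -lerBrDr h1 h2.
rewrite !lebesgue_measure_itv /= !lte_fin ltrD2r.
by case: ifP => // _; rewrite -!EFinD; congr (_%:E); rewrite opprB addrA addrNK.
Qed.



Lemma ge0_integral_shift (c : R) (f : R -> \bar R) : measurable_fun setT f ->
  (forall x, (0 <= f x)%E) ->
  (\int[mu]_x f (x + c)%R = \int[mu]_x f x)%E.
Proof.
move=> mf f0.
have := @ge0_integral_pushforward _ _ (measurableTypeR R) (measurableTypeR R) R
  (shf c) (mshift c) mu setT f measurableT mf (fun y _ => f0 y).
rewrite preimage_setT => <-.
apply: eq_measure_integral; first exact: mshift.
move=> Hm A mA _; exact: lebesgue_shift.
Qed.

Lemma integral_shift (c : R) (f : R -> \bar R) : measurable_fun setT f ->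
  (\int[mu]_x f (x + c)%R = \int[mu]_x f x)%E.
Proof.
move=> mf.
rewrite integralE [in RHS]integralE.
have mp : measurable_fun setT (funepos f) by exact: measurable_funepos.
have mn : measurable_fun setT (funeneg f) by exact: measurable_funeneg.
have := ge0_integral_shift c (funepos f) mp (fun x => funepos_ge0 f x).
have := ge0_integral_shift c (funeneg f) mn (fun x => funeneg_ge0 f x).
move=> <- <-; congr (_ - _)%E; apply: eq_integral => x _; by rewrite ?funeposE ?funenegE.
Qed.
End S.

Section C.
Context {R : realType}.
Local Notation mu := (@lebesgue_measure R).
Local Notation cRe := (@complex.Re R).
Local Notation cIm := (@complex.Im R).

Lemma ReD (x y : R[i]) : cRe (x + y) = cRe x + cRe y.
Proof. by case: x; case: y. Qed.
Lemma ImD (x y : R[i]) : cIm (x + y) = cIm x + cIm y.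
Proof. by case: x; case: y. Qed.
Lemma ReM (x y : R[i]) : cRe (x * y) = cRe x * cRe y - cIm x * cIm y.
Proof. by case: x => a b; case: y => c d. Qed.
Lemma ImM (x y : R[i]) : cIm (x * y) = cRe x * cIm y + cIm x * cRe y.
Proof. by case: x => a b; case: y => c d /=. Qed.
Lemma Reconj (x : R[i]) : cRe (x^*) = cRe x.
Proof. by case: x. Qed.
Lemma Imconj (x : R[i]) : cIm (x^*) = - cIm x.
Proof. by case: x. Qed.

Definition Cmeas (f : R -> R[i]) :=
  measurable_fun setT (fun t => cRe (f t)) /\ measurable_fun setT (fun t => cIm (f t)).
Definition Cint (f : R -> R[i]) :=
  mu.-integrable setT (EFin \o (fun t => cRe (f t))) /\
  mu.-integrable setT (EFin \o (fun t => cIm (f t))).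

Lemma CintD f g : Cint f -> Cint g -> Cint (fun t => f t + g t).
Proof.
move=> [f1 f2] [g1 g2]; split.
  apply: eq_integrable (integrableD _ f1 g1) => // t _.
  by rewrite /= ReD EFinD.
apply: eq_integrable (integrableD _ f2 g2) => // t _.
by rewrite /= ImD EFinD.
Qed.

Lemma Cint0 : Cint (fun _ => 0).
Proof.
by split; apply: eq_integrable (integrable0 mu setT) => // t _.
Qed.

Lemma Rint0 : \int[mu]_(t in setT) (0 : R) = 0.
Proof. by rewrite /Rintegral integral0. Qed.

Lemma Cintegral0 : Cintegral (fun _ : R => 0 : R[i]) = 0.
Proof. by rewrite /Cintegral /= Rint0. Qed.

Lemma CintegralD f g : Cint f -> Cint g ->
  Cintegral (fun t => f t + g t) = Cintegral f + Cintegral g.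
Proof.
move=> [f1 f2] [g1 g2]; rewrite /Cintegral.
have -> : (fun t => cRe (f t + g t)) = (fun t => cRe (f t) + cRe (g t)).
  by apply/funext => t; rewrite ReD.
have -> : (fun t => cIm (f t + g t)) = (fun t => cIm (f t) + cIm (g t)).
  by apply/funext => t; rewrite ImD.
by rewrite !RintegralD.
Qed.

Lemma Cint_sum (I : Type) (s : seq I) (F : I -> R -> R[i]) :
  (forall i, Cint (F i)) ->
  Cint (fun t => \sum_(i <- s) F i t) /\
  Cintegral (fun t => \sum_(i <- s) F i t) = \sum_(i <- s) Cintegral (F i).
Proof.
move=> hF; elim: s => [|i s [ih1 ih2]].
  rewrite big_nil; under eq_fun do rewrite big_nil.
  by split; [exact: Cint0 | exact: Cintegral0].
rewrite big_cons; under eq_fun do rewrite big_cons.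
split; first exact: CintD.
by rewrite CintegralD // ih2.
Qed.

Lemma CintegralZ (c : R[i]) f : Cint f ->
  Cintegral (fun t => c * f t) = c * Cintegral f.
Proof.
move=> [f1 f2]; rewrite /Cintegral.
have -> : (fun t => cRe (c * f t)) = (fun t => cRe c * cRe (f t) - cIm c * cIm (f t)).
  by apply/funext => t; rewrite ReM.
have -> : (fun t => cIm (c * f t)) = (fun t => cRe c * cIm (f t) + cIm c * cRe (f t)).
  by apply/funext => t; rewrite ImM.
have iZ (k : R) (h : R -> R) : mu.-integrable setT (EFin \o h) ->
    mu.-integrable setT (EFin \o (fun t => k * h t)).
  move=> ih; apply: eq_integrable (integrableZl _ k ih) => // t _.
rewrite RintegralB ?RintegralD ?RintegralZl //; try exact: iZ.
by case: c => a b /=.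
Qed.

Lemma Cintegral_shift (c : R) f : Cmeas f ->
  Cintegral (fun t => f (t + c)) = Cintegral f.
Proof.
move=> [m1 m2]; rewrite /Cintegral /Rintegral.
rewrite (integral_shift c (EFin \o (fun t => cRe (f t)))).
  rewrite (integral_shift c (EFin \o (fun t => cIm (f t)))) //.
  exact/measurable_EFinP.
exact/measurable_EFinP.
Qed.


Definition G (a : R -> R[i]) (x y al be : R) (t : R) : R[i] :=
  a (t - x) * (a (t - y))^* * expj (al * t + be).

Lemma Cmeas_shift f x : Cmeas f -> Cmeas (fun t => f (t - x)).
Proof.
have mx : measurable_fun setT (fun t : R => t - x).
  by apply: measurable_funB => //; exact: measurable_cst.
by move=> [m1 m2]; split; [exact: (measurableT_comp m1 mx)|exact: (measurableT_comp m2 mx)].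
Qed.

Lemma Cmeas_conj f : Cmeas f -> Cmeas (fun t => (f t)^*).
Proof.
move=> [m1 m2]; split.
  by under eq_fun do rewrite Reconj.
under eq_fun do rewrite Imconj.
exact: measurable_funN.
Qed.

Lemma CmeasM f g : Cmeas f -> Cmeas g -> Cmeas (fun t => f t * g t).
Proof.
move=> [f1 f2] [g1 g2]; split.
  under eq_fun do rewrite ReM.
  by apply: measurable_funB; apply: measurable_funM.
under eq_fun do rewrite ImM.
by apply: measurable_funD; apply: measurable_funM.
Qed.

Lemma Cmeas_expj al be : Cmeas (fun t => expj (al * t + be)).
Proof.
have ma : measurable_fun setT (fun t : R => al * t + be).
  apply: measurable_funD; last exact: measurable_cst.
  by apply: measurable_funM; [exact: measurable_cst|exact: measurable_id].
split.
  exact: (measurableT_comp (continuous_measurable_fun (@continuous_cos R)) ma).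
exact: (measurableT_comp (continuous_measurable_fun (@continuous_sin R)) ma).
Qed.

Lemma Cmeas_G a x y al be : Cmeas a -> Cmeas (G a x y al be).
Proof.
move=> ma; rewrite /G.
apply: CmeasM; last exact: Cmeas_expj.
apply: CmeasM; first exact: Cmeas_shift.
by apply: Cmeas_conj; exact: Cmeas_shift.
Qed.

Definition nrm2 (z : R[i]) := cRe z ^+ 2 + cIm z ^+ 2.

Lemma nrm2_ge0 z : 0 <= nrm2 z.
Proof. by rewrite /nrm2 addr_ge0 // sqr_ge0. Qed.

Lemma boundRe z w th : `|cRe (z * w^* * expj th)| <= nrm2 z + nrm2 w.
Proof.
have h := cos2Dsin2 th.
case: z => a b; case: w => c d; rewrite /nrm2 /expj /=.
set co := cos th in h *; set si := sin th in h *.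
have e2 : (c*co+d*si)^+2 + (d*co - c*si)^+2 = c^+2 + d^+2.
  have -> : (c*co+d*si)^+2 + (d*co - c*si)^+2 = (c^+2 + d^+2) * (co^+2+si^+2) by ring.
  by rewrite h mulr1.
have h1 := sqr_ge0 (a - (c*co + d*si)).
have h2 := sqr_ge0 (b - (d*co - c*si)).
have h3 := sqr_ge0 (a + (c*co + d*si)).
have h4 := sqr_ge0 (b + (d*co - c*si)).
rewrite ler_norml; apply/andP; split; nra.
Qed.

Lemma boundIm z w th : `|cIm (z * w^* * expj th)| <= nrm2 z + nrm2 w.
Proof.
have h := cos2Dsin2 th.
case: z => a b; case: w => c d; rewrite /nrm2 /expj /=.
set co := cos th in h *; set si := sin th in h *.
have e2 : (c*si-d*co)^+2 + (c*co + d*si)^+2 = c^+2 + d^+2.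
  have -> : (c*si-d*co)^+2 + (c*co + d*si)^+2 = (c^+2 + d^+2) * (co^+2+si^+2) by ring.
  by rewrite h mulr1.
have h1 := sqr_ge0 (a - (c*si-d*co)).
have h2 := sqr_ge0 (b - (c*co + d*si)).
have h3 := sqr_ge0 (a + (c*si-d*co)).
have h4 := sqr_ge0 (b + (c*co + d*si)).
rewrite ler_norml; apply/andP; split; nra.
Qed.

Lemma int_nrm2_shift a x : L2 a ->
  mu.-integrable setT (EFin \o (fun t => nrm2 (a (t - x)))).
Proof.
move=> [m1 [m2 fin]].
have [s1 s2] : Cmeas (fun t => a (t - x)) by apply: Cmeas_shift.
have mn : measurable_fun setT (fun t : R => nrm2 (a (t - x))).
  by apply: measurable_funD; apply: measurable_funX.
have mn0 : measurable_fun setT (fun t : R => nrm2 (a t)).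
  by apply: measurable_funD; apply: measurable_funX.
apply/integrableP; split; first exact/measurable_EFinP.
have E : (\int[mu]_t (nrm2 (a (t - x)%R))%:E = \int[mu]_t (nrm2 (a t))%:E)%E :=
  integral_shift (-x) (fun t => (nrm2 (a t))%:E) (proj2 (measurable_EFinP _ _) mn0).
rewrite (_ : (fun t => `|(EFin \o (fun t => nrm2 (a (t - x)%R))) t|)%E =
             (fun t => (nrm2 (a (t - x)%R))%:E)); last first.
  by apply/funext => t; rewrite /comp /= ger0_norm // nrm2_ge0.
exact: (@eq_ind _ _ (fun z => (z < +oo)%E) fin _ (esym E)).
Qed.

Lemma Cint_G a x y al be : L2 a -> Cint (G a x y al be).
Proof.
move=> hL; have ma : Cmeas a by case: hL => ? [].
have [g1 g2] := Cmeas_G a x y al be ma.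
have iS := integrableD measurableT (int_nrm2_shift a x hL) (int_nrm2_shift a y hL).
split.
  apply: (le_integrable measurableT _ _ iS); first by apply/measurable_EFinP; [exact: g1||exact: g2].
  move=> t _; rewrite /comp /= lee_fin [X in _ <= X]ger0_norm;
    last by rewrite addr_ge0 // nrm2_ge0.
  exact: boundRe.
apply: (le_integrable measurableT _ _ iS); first by apply/measurable_EFinP; [exact: g1||exact: g2].
move=> t _; rewrite /comp /= lee_fin [X in _ <= X]ger0_norm;
  last by rewrite addr_ge0 // nrm2_ge0.
exact: boundIm.
Qed.

End C.

Section D.
Context {R : realType}.
Local Notation mu := (@lebesgue_measure R).
Local Notation cRe := (@complex.Re R).
Local Notation cIm := (@complex.Im R).

Lemma expjD (u v : R) : expj (u + v) = expj u * expj v.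
Proof. by rewrite /expj cosD sinD /=; congr Complex; ring. Qed.

Lemma expj0 : expj (0 : R) = 1.
Proof. by rewrite /expj cos0 sin0. Qed.

Lemma expjMn (x : R) (k : nat) : expj (k%:R * x) = expj x ^+ k.
Proof.
elim: k => [|k ih]; first by rewrite mul0r expj0 expr0.
by rewrite -addn1 natrD mulrDl mul1r expjD ih addn1 exprSr.
Qed.

Lemma expj2pi : expj (2 * pi : R) = 1.
Proof. by rewrite /expj mulr_natl cos2pi sin2pi. Qed.

Lemma expj_2piZ (z : int) : expj (2 * pi * z%:~R : R) = 1.
Proof.
case: z => k.
  by rewrite -pmulrn mulr_natr -mulr_natl expjMn expj2pi expr1n.
rewrite NegzE intrN mulrN.
have h : expj (- (2 * pi * (k.+1)%:~R)) * expj (2 * pi * (k.+1)%:~R : R) = 1.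
  by rewrite -expjD addNr expj0.
move: h; rewrite -pmulrn mulr_natr -mulr_natl expjMn expj2pi expr1n mulr1.
by rewrite mulr_natl -mulr_natr.
Qed.

Lemma G_shift (a : R -> R[i]) (x y al be c : R) : L2 a ->
  Cintegral (G a x y al be) = expj (al * c) * Cintegral (G a (x - c) (y - c) al be).
Proof.
move=> hL; have ma : Cmeas a by case: hL => ? [].
rewrite -(Cintegral_shift c _ (Cmeas_G a x y al be ma)) -CintegralZ; last exact: Cint_G.
congr Cintegral; apply/funext => t; rewrite /G.
have e1 : t + c - x = t - (x - c) by ring.
have e2 : t + c - y = t - (y - c) by ring.
have e3 : al * (t + c) + be = (al * t + be) + al * c by ring.
by rewrite e1 e2 e3 expjD; ring.
Qed.


Lemma G_zero (a : R -> R[i]) (Ta T tau al be : R) (k : int) (D : nat) :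
  0 < T -> `|tau| < T -> Ta <= D%:R * T ->
  (forall t : R, Ta / 2 < `|t| -> a t = 0) ->
  (k < - D%:Z)%R || (D%:Z < k)%R ->
  Cintegral (G a (k%:~R * T) tau al be) = 0.
Proof.
move=> hT htau hD ha hk.
rewrite -(@Cintegral0 R); congr Cintegral; apply/funext => t; rewrite /G.
have [h1|h1] := ltrP (Ta/2) `|t - k%:~R * T|.
  by rewrite ha ?mul0r.
have [h2|h2] := ltrP (Ta/2) `|t - tau|.
  by rewrite (ha (t - tau)) // rmorph0 mulr0 mul0r.
exfalso; move: h1 h2 htau; rewrite !ler_norml ltr_norml.
move=> /andP[h1 h1'] /andP[h2 h2'] /andP[h3 h3'].
case/orP: hk => hk.
  have : (k%:~R : R) <= (- D%:Z - 1)%:~R by rewrite ler_int; lia.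
  rewrite intrB intrN => hK.
  change ((D%:Z)%:~R : R) with (D%:R : R) in hK.
  have hp : 0 <= (- (D%:R : R) - 1 - k%:~R) * T.
    by apply: mulr_ge0; [rewrite subr_ge0|exact: ltW].
  nra.
have : ((D%:Z + 1)%:~R : R) <= k%:~R by rewrite ler_int; lia.
rewrite intrD => hK.
change ((D%:Z)%:~R : R) with (D%:R : R) in hK.
have hp : 0 <= (k%:~R - (D%:R : R) - 1) * T.
  by apply: mulr_ge0; [lra|exact: ltW].
nra.
Qed.

Lemma sum_reindex (F : int -> R[i]) (N D j : nat) :
  (forall k : int, (k < - D%:Z)%R || (D%:Z < k)%R -> F k = 0) -> (j < N)%N ->
  \sum_(i < N + 2 * D) F (i%:Z - D%:Z - j%:Z) =
  \sum_(l < (2 * D).+1) F (l%:Z - D%:Z).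
Proof.
move=> hF hj.
rewrite -(big_mkord xpredT (fun i => F (i%:Z - D%:Z - j%:Z))).
rewrite -(big_mkord xpredT (fun l => F (l%:Z - D%:Z))).
rewrite (@big_cat_nat _ _ _ j) //=; last lia.
rewrite (@big_cat_nat _ _ _ (j + (2*D).+1) j) //=; last lia.
rewrite big_nat_cond big1 ?add0r; last first.
  move=> i /andP[/andP[_ hi] _]; apply: hF; apply/orP; left; lia.
rewrite [X in _ + X]big_nat_cond [X in _ + X]big1 ?addr0; last first.
  move=> i /andP[/andP[hi _] _]; apply: hF; apply/orP; right; lia.
rewrite -{1 2}(add0n j) big_addn addKn.
apply: eq_bigr => i _; congr F; lia.
lia.
Qed.

Lemma roots_sum (n : int) (N : nat) : (1 <= N)%N -> n != 0 ->
  (`|n| <= (N - 1)%:Z)%R ->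
  \sum_(j < N) expj (- (2 * pi * n%:~R / N%:R) : R) ^+ j = 0.
Proof.
move=> hN hn hnN.
have N0 : (N%:R : R) != 0 by rewrite pnatr_eq0; lia.
set w := expj _.
have wN : w ^+ N = 1.
  rewrite /w -expjMn.
  have -> : (N%:R * - (2 * pi * n%:~R / N%:R) : R) = 2 * pi * (- n)%:~R.
    by rewrite intrN; field.
  exact: expj_2piZ.
have w1 : w != 1.
  apply/negP => /eqP hw.
  have hc : cos (- (2 * pi * n%:~R / N%:R)) = 1 :> R by move: hw; rewrite /w /expj => -[].
  set x : R := pi * n%:~R / N%:R.
  have : cos (x *+ 2) = 1 by rewrite -hc cosN /x; congr cos; rewrite mulr2n; ring.
  rewrite cos_mulr2n => hx.
  have hs : sin x = 0.
    have := cos2Dsin2 x; move: hx; rewrite mulr2n => hx hcs.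
    by apply/eqP; rewrite -sqrf_eq0; apply/eqP; lra.
  have pi0 := @pi_gt0 R.
  have hNr : (0 : R) < N%:R by rewrite ltr0n.
  have hr : x = pi * (n%:~R / N%:R) by rewrite /x mulrA.
  have [hp|hm] : (0 < n)%R \/ (n < 0)%R by lia.
    have h1 : (1 : R) <= n%:~R by rewrite ler1z; lia.
    have h2 : (n%:~R : R) <= N%:R - 1.
      have : (n%:~R : R) <= (N%:Z - 1)%:~R by rewrite ler_int; lia.
      by rewrite intrB.
    have r0 : 0 < n%:~R / N%:R :> R by apply: divr_gt0; lra.
    have r1 : n%:~R / N%:R < 1 :> R by rewrite ltr_pdivrMr // mul1r; lra.
    have : 0 < sin x.
      apply: sin_gt0_pi; rewrite hr; apply/andP; split; first exact: mulr_gt0.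
      by rewrite -[X in _ < X]mulr1 ltr_pM2l.
    by rewrite hs ltxx.
  have h1 : (n%:~R : R) <= - 1.
    have : (n%:~R : R) <= (- 1)%:~R by rewrite ler_int; lia.
    by rewrite intrN.
  have h2 : - (N%:R - 1) <= (n%:~R : R).
    have : ((- (N%:Z - 1))%:~R : R) <= n%:~R by rewrite ler_int; lia.
    by rewrite intrN intrB.
  have r0 : 0 < - (n%:~R / N%:R) :> R by rewrite -mulNr; apply: divr_gt0; lra.
  have r1 : - (n%:~R / N%:R) < 1 :> R by rewrite -mulNr ltr_pdivrMr // mul1r; lra.
  have : 0 < sin (- x).
    apply: sin_gt0_pi; rewrite hr -mulrN; apply/andP; split; first exact: mulr_gt0.
    by rewrite -[X in _ < X]mulr1 ltr_pM2l.
  by rewrite sinN hs oppr0 ltxx.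
have := subrX1 w N; rewrite wN subrr => /esym/eqP; rewrite mulf_eq0 subr_eq0 (negbTE w1) /=.
by move/eqP.
Qed.

End D.

Section E.
Context {R : realType}.

Lemma integrand_expand (a : R -> R[i]) (T tau nu : R) (N D : nat) (t : R) :
  ddop_c N D T a t * (ddop N T a (t - tau))^* * expj (- (2 * pi * nu * (t - tau)))
  = \sum_(j < N) \sum_(i < N + 2 * D)
      G a ((i%:R - D%:R) * T) (tau + j%:R * T) (- (2 * pi * nu)) (2 * pi * nu * tau) t.
Proof.
rewrite /ddop_c /ddop raddf_sum big_distrl /= big_distrl /=.
rewrite exchange_big /=; apply: eq_bigr => j _.
rewrite big_distrr /= big_distrl /=; apply: eq_bigr => i _.
rewrite /G; congr (_ * _ * expj _); last by ring.
by congr (_^*); congr a; ring.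
Qed.


Lemma expand (a : R -> R[i]) (T Ta tau : R) (N D : nat) (n : int) :
  0 < T -> (1 <= N)%N -> L2 a ->
  (forall t : R, Ta / 2 < `|t| -> a t = 0) ->
  `|tau| < T -> Ta <= D%:R * T ->
  ambiguity (ddop_c N D T a) (ddop N T a) tau (n%:~R * (N%:R * T)^-1)
  = (\sum_(j < N) expj (- (2 * pi * n%:~R / N%:R) : R) ^+ j) *
    \sum_(l < (2 * D).+1)
      Cintegral (G a ((l%:Z - D%:Z)%:~R * T) tau
        (- (2 * pi * (n%:~R * (N%:R * T)^-1))) (2 * pi * (n%:~R * (N%:R * T)^-1) * tau)).
Proof.
move=> hT hN hL ha htau hD.
set nu := n%:~R * (N%:R * T)^-1.
have N0 : (N%:R : R) != 0 by rewrite pnatr_eq0; lia.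
have T0 : T != 0 by rewrite gt_eqF.
rewrite /ambiguity.
under eq_fun do rewrite integrand_expand.
rewrite (Cint_sum _ _ _ (fun j => (Cint_sum _ _ _ (fun i => Cint_G _ _ _ _ _ hL)).1)).2.
under eq_bigr do rewrite (Cint_sum _ _ _ (fun i => Cint_G _ _ _ _ _ hL)).2.
rewrite mulr_suml; apply: eq_bigr => j _.
have -> : (expj (- (2 * pi * n%:~R / N%:R)) ^+ j : R[i]) =
          expj (- (2 * pi * nu) * (j%:R * T)).
  rewrite -expjMn; congr expj; rewrite /nu; field; exact/andP.
rewrite -(sum_reindex (fun k => Cintegral (G a (k%:~R * T) tau
        (- (2 * pi * nu)) (2 * pi * nu * tau))) N D j _ (ltn_ord j)); last first.
  by move=> k hk; apply: (G_zero _ _ _ _ _ _ _ _ hT htau hD ha hk).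
rewrite mulr_sumr; apply: eq_bigr => i _.
rewrite (G_shift _ _ _ _ _ (j%:R * T) hL).
have e1 : (i%:R - D%:R) * T - j%:R * T = ((i%:Z - D%:Z - j%:Z)%:~R) * T.
  by rewrite !intrB !mulrBl.
have e2 : tau + j%:R * T - j%:R * T = tau by rewrite addrK.
by rewrite e1 e2.
Qed.


Lemma Kval (a : R -> R[i]) (T : R) (M N : nat) (m k : int) :
  (M%:R : R) != 0 -> L2 a ->
  (forall k : int,
     Cintegral (fun t => a t * (a (t - k%:~R * (T / M%:R)))^*)
     = (N%:R)^-1 * kdelta R k) ->
  Cintegral (G a (k%:~R * T) (m%:~R * (T / M%:R)) 0 0)
  = (N%:R)^-1 * kdelta R (m - k * M%:Z).
Proof.
move=> M0 hL hNy.
rewrite (G_shift _ _ _ _ _ (k%:~R * T) hL) mul0r expj0 mul1r -hNy.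
congr Cintegral; apply/funext => t; rewrite /G mul0r add0r expj0 mulr1 subrr subr0.
congr (a t * (a (t - _))^*); rewrite intrB intrM; field.
by [].
Qed.

End E.

Theorem lemma2 (R : realType) (T Ta : R) (M N : nat) (a : R -> R[i]) :
  0 < T -> (1 <= M)%N -> (1 <= N)%N -> 0 < Ta ->
  L2 a ->
  (forall t : R, Ta / 2 < `|t| -> a t = 0) ->
  (forall k : int,
     Cintegral (fun t => a t * (a (t - k%:~R * (T / M%:R)))^*)
     = (N%:R)^-1 * kdelta R k) ->
  let D := `|Num.ceil (Ta / T)|%N in
  forall m n : int, (`|m| <= (M - 1)%:Z) -> (`|n| <= (N - 1)%:Z) ->
    ambiguity (ddop_c N D T a) (ddop N T a)
              (m%:~R * (T / M%:R)) (n%:~R * (N%:R * T)^-1)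
    = kdelta R m * kdelta R n.
Proof.
move=> hT hM hN hTa hL ha hNy D m n hm hn.
have M0 : (M%:R : R) != 0 by rewrite pnatr_eq0; lia.
have N0 : (N%:R : R) != 0 by rewrite pnatr_eq0; lia.
have T0 : T != 0 by rewrite gt_eqF.
have htau : `|m%:~R * (T / M%:R)| < T.
  have hMr : (1 : R) <= M%:R by rewrite ler1n.
  have hm1 : - (M%:R - 1) <= (m%:~R : R).
    have : ((- (M%:Z - 1))%:~R : R) <= m%:~R by rewrite ler_int; lia.
    by rewrite intrN intrB.
  have hm2 : (m%:~R : R) <= M%:R - 1.
    have : (m%:~R : R) <= (M%:Z - 1)%:~R by rewrite ler_int; lia.
    by rewrite intrB.
  set tau := m%:~R * (T / M%:R).
  have htM : tau * M%:R = m%:~R * T by rewrite /tau; field.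
  have hp1 : 0 <= (M%:R - 1 - m%:~R) * T by apply: mulr_ge0; lra.
  have hp2 : 0 <= (m%:~R + M%:R - 1) * T by apply: mulr_ge0; lra.
  rewrite ltr_norml; apply/andP; split; nra.
have hD : Ta <= D%:R * T.
  rewrite /D natr_absz gtr0_norm; last by rewrite ceil_gt0 divr_gt0.
  rewrite -ler_pdivrMr //; exact: ceil_ge.
rewrite (expand _ _ _ _ _ _ _ hT hN hL ha htau hD).
have [-> | hn0] := eqVneq n 0; last first.
  by rewrite roots_sum // mul0r /kdelta (negbTE hn0) mulr0.
rewrite ?(mulr0z, mul0r, mulr0, oppr0, expj0).
under eq_bigr do rewrite expr1n.
rewrite sumr_const card_ord.
under eq_bigr => l _ do rewrite (Kval _ _ _ _ m _ M0 hL hNy).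
have hDl : (D < (2 * D).+1)%N by lia.
rewrite (bigD1 (Ordinal hDl)) //= big1; last first.
  move=> l hl.
  have hl' : (l : nat) != D.
    by apply: contra hl => /eqP h; apply/eqP; apply: val_inj.
  rewrite /kdelta.
  have : m - (l%:Z - D%:Z) * M%:Z != 0.
    have : (l%:Z - D%:Z) != 0 by lia.
    move: (l%:Z - D%:Z) => k hk; nia.
  by move/negbTE => ->; rewrite mulr0.
rewrite subrr mul0r subr0 addr0 /kdelta eqxx mulr1.
rewrite -mulr_natl !mulr1 mulrA mulfV ?mul1r // pnatr_eq0; lia.
Qed.
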